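(* Let $A$ be a finite set of alternatives with $|A|\ge 3$, let $N=\{1,\dots,n\}$ with $n\ge 2$, and let $\mathbb{D}$ be a minimally rich domain of linear orders over $A$. If every unanimous and locally strategy-proof social choice function $f:\mathbb{D}^n\to A$ satisfies dictatorship, then $\mathbb{D}$ is connected with two distinct neighbours.
   Context: A domain is a set $\mathbb{D}$ of linear orders (strict preferences) over $A$; a preference profile is $P=(P_1,\dots,P_n)\in\mathbb{D}^n$. For a linear order $P_i$, $r_k(P_i)$ is its $k$-th ranked alternative. $\mathbb{D}$ is minimally rich if every $a\in A$ is ranked first in some $P_i\in\mathbb{D}$. Two linear orders $P_i,P_i'$ are adjacent ($P_i\sim P_i'$) if $P_i'$ is obtained from $P_i$ by swapping two consecutively ranked alternatives and leaving all other ranks unchanged. A social choice function (scf) is a map $f:\mathbb{D}^n\to A$. It is unanimous if $f(P)=a$ whenever every voter ranks $a$ first. It is locally strategy-proof if there is no voter $i$, profile $P$, and $P_i'\in\mathbb{D}$ with $P_i'\sim P_i$ such that $f(P_i',P_{-i})\,P_i\,f(P_i,P_{-i})$. It satisfies dictatorship if there is a voter $i$ with $f(P)=r_1(P_i)$ for all $P\in\mathbb{D}^n$. A path in $\mathbb{D}$ is a sequence of distinct preferences in $\mathbb{D}$ in which consecutive ones are adjacent; $\mathbb{D}$ is connected if any two of its preferences are joined by a path in $\mathbb{D}$. For $\bar{\mathbb{D}}\subseteq\mathbb{D}$, a neighbour of $\bar{\mathbb{D}}$ in $\mathbb{D}$ is a $P_i\in\mathbb{D}\setminus\bar{\mathbb{D}}$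 adjacent to some element of $\bar{\mathbb{D}}$. Two preferences $P_i,P_i'\in\mathbb{D}$ are top-connected in $\mathbb{D}$ if there is a path from $P_i$ to $P_i'$ in $\mathbb{D}$ all of whose members have the same top-ranked alternative. The top-connected closure $\mathbb{D}^{TCC}(P_i)$ is the set of preferences in $\mathbb{D}$ top-connected to $P_i$, together with $P_i$. $\mathbb{D}$ is connected with two distinct neighbours if (1) $\mathbb{D}$ is connected, and (2) for every $P_i\in\mathbb{D}$ there exist two neighbours $P_i',P_i''$ of $\mathbb{D}^{TCC}(P_i)$ in $\mathbb{D}$ with $r_1(P_i')\ne r_1(P_i'')$. *)

(* Defs.v *)
From mathcomp Require Import all_boot.
Set Implicit Arguments. Unset Strict Implicit. Unset Printing Implicit Defensive.

Section SCF.
Variable A : finType.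

(* A linear order (strict preference) over A is represented by the list of
   all alternatives from best to worst: r_k(P) = nth _ P (k-1). *)
Definition linear_order (s : seq A) : bool := perm_eq s (enum A).

Definition top (s : seq A) : option A := ohead s.

Definition prefers (s : seq A) (x y : A) : bool := index x s < index y s.

Definition adjacent (s t : seq A) : Prop :=
  exists (l1 l2 : seq A) (a b : A), a != b /\
    s = l1 ++ a :: b :: l2 /\ t = l1 ++ b :: a :: l2.

Definition is_domain (D : pred (seq A)) : Prop :=
  forall s, D s -> linear_order s.

Definition minimally_rich (D : pred (seq A)) : Prop :=
  forall a : A, exists s, D s /\ top s = Some a.

Fixpoint adj_chain (x : seq A) (p : seq (seq A)) : Prop :=
  match p with
  | [::] => True
  | y :: q => adjacent x y /\ adj_chain y q
  end.

Definition is_path (D : pred (seq A)) (x : seq A) (p : seq (seq A)) : Prop :=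
  uniq (x :: p) /\ all D (x :: p) /\ adj_chain x p.

Definition connected (D : pred (seq A)) : Prop :=
  forall s t, D s -> D t -> exists p, is_path D s p /\ last s p = t.

Definition top_connected (D : pred (seq A)) (s t : seq A) : Prop :=
  exists p, is_path D s p /\ last s p = t /\
            all (fun u => top u == top s) (s :: p).

Definition TCC (D : pred (seq A)) (s : seq A) (t : seq A) : Prop :=
  t = s \/ top_connected D s t.

Definition neighbour (D : pred (seq A)) (S : seq A -> Prop) (t : seq A) : Prop :=
  D t /\ ~ S t /\ exists u, S u /\ adjacent u t.

Definition connected_two_neighbours (D : pred (seq A)) : Prop :=
  connected D /\
  forall s, D s -> exists t1 t2,
    neighbour D (TCC D s) t1 /\ neighbour D (TCC D s) t2 /\ top t1 <> top t2.

Variable n : nat.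
Notation profile := {ffun 'I_n -> seq A}.

Definition in_domain (D : pred (seq A)) (P : profile) : Prop := forall i, D (P i).

Definition deviate (P : profile) (i : 'I_n) (s : seq A) : profile :=
  [ffun j => if j == i then s else P j].

Definition unanimous (D : pred (seq A)) (f : profile -> A) : Prop :=
  forall P a, in_domain D P -> (forall i, top (P i) = Some a) -> f P = a.

Definition locally_strategy_proof (D : pred (seq A)) (f : profile -> A) : Prop :=
  forall P i s, in_domain D P -> D s -> adjacent (P i) s ->
    ~ prefers (P i) (f (deviate P i s)) (f P).

Definition dictatorship (D : pred (seq A)) (f : profile -> A) : Prop :=
  exists i, forall P, in_domain D P -> Some (f P) = top (P i).

End SCF.

(* Main.v *)
Require Import Defs.
From mathcomp Require Import all_boot.
From Stdlib Require Import Classical ClassicalEpsilon.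
Set Implicit Arguments. Unset Strict Implicit. Unset Printing Implicit Defensive.

Section Proofs.
Variable A : finType.
Implicit Types (s t u : seq A) (D : pred (seq A)).

Lemma adjacent_sym s t : adjacent s t -> adjacent t s.
Proof. case=> l1 [l2 [a [b [ab [-> ->]]]]]; exists l1, l2, b, a; split=> //; by rewrite eq_sym. Qed.

Lemma chain_rcons (x : seq A) p y : adj_chain x p -> adjacent (last x p) y -> adj_chain x (rcons p y).
Proof. elim: p x => [|z p IH] x /=; first by move=> _ H; split. case=> H1 H2 H3; split=> //; exact: IH. Qed.

Lemma chain_cat (x : seq A) p1 p2 : adj_chain x (p1 ++ p2) -> adj_chain (last x p1) p2.
Proof. elim: p1 x => [|z p IH] x //= [_ H]; exact: IH. Qed.

Lemma shorten (E : pred (seq A)) p (x : seq A) : adj_chain x p -> all E (x :: p) ->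
  exists q, uniq (x :: q) /\ all E (x :: q) /\ adj_chain x q /\ last x q = last x p.
Proof.
elim: p x => [|y p IH] x.
  by move=> _ HE; exists [::]; split.
move=> /= [Hxy Hc] /andP [Ex HE].
have [q [Uq [Eq [Cq Lq]]]] := IH y Hc HE.
case: (boolP (x \in y :: q)) => Hx.
- have [l1 [l2 Hr]] : exists l1 l2, y :: q = l1 ++ x :: l2.
    by case/splitPr: Hx => l1 l2; exists l1, l2.
  exists l2; split; first by move: Uq; rewrite Hr cat_uniq => /and3P [_ _ H].
  split; first by move: Eq; rewrite Hr all_cat => /andP [_ H].
  split.
    case: l1 Hr => [|z l1] /=; first by case=> <- <-.
    case=> Hz Hq; rewrite Hq in Cq; move/chain_cat: Cq; by case.
  rewrite -Lq.
  have -> : last y q = last y (y :: q) by [].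
  by rewrite Hr last_cat.
- exists (y :: q); split; first by rewrite Hx Uq.
  split; first by rewrite Ex Eq.
  by split.
Qed.

Lemma best x0 t y : ~ prefers t y (odflt x0 (top t)).
Proof. case: t => [|c l] //=; rewrite /prefers /= eqxx ltn0 //. Qed.

Lemma top_some D t : is_domain D -> 0 < #|A| -> D t -> exists c, top t = Some c.
Proof.
move=> Dom A0 Dt; have := perm_size (Dom _ Dt); rewrite -cardT.
case: t {Dt} => [|c l] /=; last by exists c.
move=> H; by rewrite -H in A0.
Qed.

Lemma other (c : A) : 2 <= #|A| -> exists d, d != c.
Proof.
move=> A2; have : 0 < #|predC1 c| by rewrite cardC1; case: #|A| A2 => [|[|k]].
by case/card_gt0P => d; rewrite inE => Hd; exists d.
Qed.


Lemma construct (n : nat) D (S : seq A -> Prop) (h : seq A -> A) (x0 : A) :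
  2 <= n -> is_domain D -> minimally_rich D -> 2 <= #|A| ->
  (forall s t x, D s -> S s -> top s = Some x -> D t -> top t = Some x -> h t = x) ->
  (forall t t', D t -> D t' -> adjacent t t' -> ~ prefers t (h t') (h t)) ->
  (forall u u' t, D u -> S u -> D u' -> adjacent u u' -> ~ S u' -> D t ->
     ~ prefers u (odflt x0 (top u')) (h t)) ->
  (exists s0 t0, D s0 /\ S s0 /\ D t0 /\ Some (h t0) <> top s0) ->
  (exists u, D u /\ ~ S u) ->
  exists f : {ffun 'I_n -> seq A} -> A,
    unanimous D f /\ locally_strategy_proof D f /\ ~ dictatorship D f.
Proof.
move=> n2 Dom MR A2 HU HC2 HC1 [s0 [t0 [Ds0 [Ss0 [Dt0 Hst]]]]] [u [Du Su]].
have lt0 : 0 < n by apply: leq_trans n2.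
have lt1 : 1 < n by [].
pose i0 := Ordinal lt0. pose i1 := Ordinal lt1.
have i10 : i1 != i0 by [].
pose f := fun P : {ffun 'I_n -> seq A} =>
  if excluded_middle_informative (S (P i0)) then h (P i1) else odflt x0 (top (P i0)).
have irr : forall t (y : A), ~ prefers t y y by move=> t y; rewrite /prefers ltnn.
exists f; split; [|split].
- move=> P a HP Ht. rewrite /f. case: excluded_middle_informative => HS.
  + exact: (HU _ _ a (HP i0) HS (Ht i0) (HP i1) (Ht i1)).
  + by rewrite Ht.
- move=> P i s HP Ds Hadj. rewrite /f /deviate !ffunE.
  case: (eqVneq i i0) => [Hi|Hi].
  + subst i; rewrite (negbTE i10).
    case: (excluded_middle_informative (S (P i0))) => HS; last exact: best.
    case: excluded_middle_informative => HS'; first exact: irr.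
    exact: HC1.
  + 
    case: excluded_middle_informative => HS; last exact: irr.
    case: (eqVneq i1 i) => [Hi1|Hi1]; last exact: irr.
    subst i; exact: HC2.
- case=> i Hi.
  have A0 : 0 < #|A| by apply: leq_trans A2.
  case: (eqVneq i i0) => [Hi0|Hi0].
  + pose P : {ffun 'I_n -> seq A} := [ffun j => if j == i0 then s0 else t0].
    have HP : in_domain D P by move=> j; rewrite /P ffunE; case: ifP.
    have E00 : (i0 == i0) = true by apply: eqxx.
    have := Hi P HP; rewrite Hi0 /f /P !ffunE E00 (negbTE i10).
    by case: excluded_middle_informative.
  + have [c Hc] := top_some Dom A0 Du.
    have [d Hd] := other c A2.
    have [v [Dv Hv]] := MR d.
    pose P : {ffun 'I_n -> seq A} := [ffun j => if j == i0 then u else v].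
    have HP : in_domain D P by move=> j; rewrite /P ffunE; case: ifP.
    have E00 : (i0 == i0) = true by apply: eqxx.
    have := Hi P HP; rewrite /f /P !ffunE E00 (negbTE Hi0).
    destruct (excluded_middle_informative (S u)) as [Su'|Hn]; first by case: Su.
    rewrite Hc Hv /= => -[E]; by rewrite E eqxx in Hd.
Qed.

End Proofs.
From mathcomp Require Import zify.

Theorem theorem1 (A : finType) (n : nat) (D : pred (seq A)) :
  3 <= #|A| -> 2 <= n ->
  is_domain D -> minimally_rich D ->
  (forall f : {ffun 'I_n -> seq A} -> A,
      unanimous D f -> locally_strategy_proof D f -> dictatorship D f) ->
  connected_two_neighbours D.
Proof.
move=> A3 n2 Dom MR Hdict.
have A2 : 2 <= #|A| by apply: ltnW.
have A0 : 0 < #|A| by apply: leq_trans A2.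
have [x0 _] : exists x : A, true by case/card_gt0P: A0 => x _; exists x.
split.
- move=> s t Ds Dt; apply: NNPP => Hno.
  pose S := fun u => exists p, adj_chain s p /\ all D (s :: p) /\ last s p = u.
  have [c Hc] := top_some Dom A0 Ds.
  have [d Hd] := other c A2.
  have [t0 [Dt0 Ht0]] := MR d.
  suff [f [Hu [Hl Hnd]]] : exists f : {ffun 'I_n -> seq A} -> A,
      unanimous D f /\ locally_strategy_proof D f /\ ~ dictatorship D f.
    by apply: Hnd; apply: Hdict.
  apply: (construct (S := S) (h := fun t => odflt x0 (top t)) (x0 := x0)) => //.
  + by move=> s' t' x _ _ _ _ ->.
  + by move=> t1 t2 _ _ _; apply: best.
  + move=> u u' t1 Du Su Du' Hadj nSu' _; exfalso; apply: nSu'.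
    case: Su => p [Hc' [Ha Hl]].
    exists (rcons p u'); split; first by apply: chain_rcons => //; rewrite Hl.
    split; first by rewrite -rcons_cons all_rcons Du' Ha.
    by rewrite last_rcons.
  + exists s, t0; split => //; split; first by exists [::]; split => //=; rewrite Ds.
    split => //; rewrite Ht0 Hc => -[E]; by rewrite E eqxx in Hd.
  + exists t; split => // -[p [Hc' [Ha Hl]]]; apply: Hno.
    have [q [U [E [C L]]]] := shorten Hc' Ha.
    by exists q; split; [split | rewrite L].
- move=> s Ds; apply: NNPP => Hno.
  have Hall : forall t1 t2, neighbour D (TCC D s) t1 -> neighbour D (TCC D s) t2 -> top t1 = top t2.
    move=> t1 t2 N1 N2; apply: NNPP => Hne; apply: Hno; by exists t1, t2.
  have [a Ha] := top_some Dom A0 Ds.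
  have F1 : forall u, TCC D s u -> D u /\ top u = Some a.
    move=> u [->|[p [[_ [HD _]] [Hl Ht]]]]; first by [].
    have Hu : u \in s :: p by rewrite -Hl mem_last.
    split; first by move/allP: HD; apply.
    by move/allP: Ht => /(_ u Hu) /eqP ->.
  have F2 : forall t, neighbour D (TCC D s) t -> top t <> Some a.
    move=> t [Dt [nT [u [Tu Hadj]]]] Hta; apply: nT; right.
    pose E := fun w => D w && (top w == top s).
    have [p [Cp [Ep Lp]]] : exists p, adj_chain s p /\ all E (s :: p) /\ last s p = u.
      case: Tu => [->|[p [[_ [HD Hc]] [Hl Ht]]]].
        by exists [::]; split => //=; rewrite /E Ds eqxx.
      exists p; split => //; split => //.
      by apply/allP => w Hw; rewrite /E (allP HD w Hw) (allP Ht w Hw).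
    have Cr : adj_chain s (rcons p t) by apply: chain_rcons => //; rewrite Lp.
    have Er : all E (s :: rcons p t).
      by rewrite -rcons_cons all_rcons Ep /E Dt Hta Ha eqxx.
    have [q [Uq [Eq [Cq Lq]]]] := shorten Cr Er.
    exists q; split; first split => //.
    + split => //; apply/allP => w Hw; by case/andP: (allP Eq w Hw).
    + split; first by rewrite Lq last_rcons.
      apply/allP => w Hw; by case/andP: (allP Eq w Hw).
  have [b [Hba Hb]] : exists b, b != a /\ forall t, neighbour D (TCC D s) t -> top t = Some b.
    case: (classic (exists t0, neighbour D (TCC D s) t0)) => [[t0 N0]|NN].
      have [b Hb] := top_some Dom A0 (proj1 N0).
      exists b; split.
        apply/eqP => E; apply: (F2 t0 N0); by rewrite Hb E.
      move=> t Nt; by rewrite (Hall t t0 Nt N0).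
    have [b Hb] := other a A2; exists b; split => // t Nt; case: NN; by exists t.
  suff [f [Hu [Hl Hnd]]] : exists f : {ffun 'I_n -> seq A} -> A,
      unanimous D f /\ locally_strategy_proof D f /\ ~ dictatorship D f.
    by apply: Hnd; apply: Hdict.
  apply: (construct (S := TCC D s) (h := fun t => if prefers t b a then b else a) (x0 := x0)) => //.
  + move=> s' t x Ds' Ts' Hs' Dt Ht.
    have [_ E] := F1 _ Ts'; rewrite E in Hs'; case: Hs' => Exa; subst x.
    case: t Ht {Dt} => [|c l] //= [->]; by rewrite /prefers /= eqxx ltn0.
  + move=> t t' _ _ _; rewrite /prefers.
    case: ifP => H1; case: ifP => H2; lia.
  + move=> u u' t Du Tu Du' Hadj nT' Dt.
    have -> : top u' = Some b by apply: Hb; split => //; split => //; exists u.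
    have [_ Hua] := F1 u Tu.
    rewrite /=; case: ifP => _; first by rewrite /prefers ltnn.
    case: u Hua {Du Tu Hadj} => [|c l] //= [->]; by rewrite /prefers /= eqxx ltn0.
  + exists s; have [t0 [Dt0 Ht0]] := MR b; exists t0.
    split => //; split; first by left.
    split => //; rewrite Ha.
    case: t0 Ht0 {Dt0} => [|c l] //= [->].
    rewrite /prefers /= eqxx (negbTE Hba) /= => -[E]; by rewrite E eqxx in Hba.
  + have [u [Du Hu]] := MR b; exists u; split => // Tu.
    have [_ E] := F1 u Tu; rewrite Hu in E; case: E => E; by rewrite E eqxx in Hba.
Qed.
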